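(* Let $K$ be a number field and let $\alpha,\beta$ be multiplicatively independent positive rational numbers. Let $F\in K[[x^{\mathbb{R}}]]$ be a Hahn series satisfying nontrivial homogeneous equations $\sum_{i=0}^{d_1}P_i(x)F(x^{\alpha^i})=0$ and $\sum_{i=0}^{d_2}Q_i(x)F(x^{\beta^i})=0$ with $P_i,Q_i\in K[x]$, $P_{d_1}\ne0$, $Q_{d_2}\ne0$. Suppose there are $s,s'\in\mathbb{R}$ with ${}_{\alpha^{\mathbb{Z}}s+\mathbb{Z}[\alpha,\alpha^{-1}]}[F]\ne0$ and ${}_{\beta^{\mathbb{Z}}s'+\mathbb{Z}[\beta,\beta^{-1}]}[F]\ne0$. Then there is a positive integer $n$ such that ${}_{\mathbb{Z}[\alpha,\alpha^{-1}]}[F(x^n)]\ne0$ and ${}_{\mathbb{Z}[\beta,\beta^{-1}]}[F(x^n)]\ne0$.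
   Context: $K[[x^{\mathbb{R}}]]$ is the field of Hahn series $\sum_{i\in\mathbb{R}} f_ix^i$ ($f_i\in K$) with well-ordered support; $F(x^\gamma)=\sum_if_ix^{\gamma i}$. Positive reals are multiplicatively independent if $\log\alpha/\log\beta\notin\mathbb{Q}$. $\gamma^{\mathbb{Z}}s+\mathbb{Z}[\gamma,\gamma^{-1}]=\{\gamma^m s+r: m\in\mathbb{Z}, r\in\mathbb{Z}[\gamma,\gamma^{-1}]\}$, with $\mathbb{Z}[\gamma,\gamma^{-1}]$ the subring of $\mathbb{Q}$ generated by $\gamma^{\pm1}$. For $A\subseteq\mathbb{R}$, ${}_A[G]$ is the Hahn series of the terms of $G$ with exponents in $A$. *)

(* Defs.v *)
From HB Require Import structures.
From mathcomp Require Import all_boot all_order all_algebra all_field.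
From mathcomp Require Import all_classical all_reals all_analysis.
Set Implicit Arguments. Unset Strict Implicit. Unset Printing Implicit Defensive.
Import Order.TTheory GRing.Theory Num.Theory.
Local Open Scope ring_scope.

(* A Hahn series in K[[x^R]] is given by its coefficient function
   f : R -> K (f t = coefficient of x^t) whose support is well-ordered. *)
Definition well_ordered_support (R : realType) (K : fieldType) (f : R -> K) : Prop :=
  forall S : R -> Prop, (forall t, S t -> f t != 0) -> (exists t, S t) ->
    exists m, S m /\ forall t, S t -> m <= t.

Definition is_rational (R : realType) (x : R) : Prop := exists q : rat, x = ratr q.

Definition mult_indep (R : realType) (a b : R) : Prop :=
  ~ is_rational (ln a / ln b).

Definition Zring (R : realType) (g : R) (x : R) : Prop :=
  exists s : seq (int * int), x = \sum_(p <- s) (p.1)%:~R * g ^ p.2.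

Definition shifted_Zring (R : realType) (g s : R) (x : R) : Prop :=
  exists (m : int) (r : R), Zring g r /\ x = g ^ m * s + r.

(* coefficient at t of  sum_{i=0}^{d} P_i(x) F(x^{g^i}),
   where F(x^c) has coefficient f (t / c) at t. *)
Definition mahler_coef (R : realType) (K : fieldType) (g : R) (d : nat)
    (P : nat -> {poly K}) (f : R -> K) (t : R) : K :=
  \sum_(i < d.+1) \sum_(k < size (P i)) (P i)`_k * f ((t - k%:R) / g ^+ i).

Definition mahler_eq (R : realType) (K : fieldType) (g : R) (d : nat)
    (P : nat -> {poly K}) (f : R -> K) : Prop :=
  forall t, mahler_coef g d P f t = 0.

(* _A[G] != 0 : G has a nonzero coefficient at some exponent in A *)
Definition restr_nonzero (R : realType) (K : fieldType) (A : R -> Prop) (f : R -> K) : Prop :=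
  exists t, A t /\ f t != 0.

(* Main.v *)
Require Import Defs.
From HB Require Import structures.
From mathcomp Require Import all_boot all_order all_algebra all_field.
From mathcomp Require Import all_classical all_reals all_analysis.
From mathcomp Require Import ring lra.
Import Order.TTheory GRing.Theory Num.Theory.
Local Open Scope ring_scope.

Lemma key (R : realType) (K : fieldType) (alpha : rat) (f : R -> K) d
  (P : nat -> {poly K}) :
  0 < alpha -> alpha != 1 -> P d != 0 -> mahler_eq (ratr alpha) d P f ->
  forall v, f v != 0 -> (forall t, f t != 0 -> v <= t) -> is_rational v.
Proof.
move=> a0 a1 Pd heq v fv vmin.
apply: contrapT => nrat.
pose a : R := ratr alpha.
have apos : 0 < a by rewrite ltr0q.
pose N := (\max_(i < d.+1) size (P i))%N.
pose T := ('I_d.+1 * 'I_N)%type.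
pose Pr := fun p : T => (P p.1)`_p.2 != 0.
pose val := fun p : T => (p.2 : nat)%:R + a ^+ p.1 * v.
have kN : forall (i : 'I_d.+1) k, (k < size (P i))%N -> (k < N)%N.
  move=> i k hk; apply: (leq_trans hk); rewrite /N; have := @leq_bigmax _ (fun i : 'I_d.+1 => size (P i)) i; exact.
have hsz : ((size (P d)).-1 < size (P d))%N by rewrite prednK // lt0n size_poly_eq0.
pose p0 : T := (ord_max, Ordinal (kN ord_max _ hsz)).
have Pp0 : Pr p0 by rewrite /Pr /= -lead_coefE lead_coef_eq0.
have [pm Ppm minpm] := @arg_minP _ R T p0 Pr val Pp0.
have dist : forall p : T, Pr p -> p != pm -> val pm < val p.
  move=> p Pp npm; rewrite lt_def minpm // andbT.
  apply/eqP => E; move: npm; case: p E Pp => i k; case: pm Ppm minpm => i0 k0 /= _ _ E _.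
  have [ii|ii] := eqVneq i i0.
    subst i0; move: E => /addIr /eqP; rewrite eqr_nat => /eqP kk.
    by apply/negP; rewrite negbK; apply/eqP; congr pair; apply: val_inj.
  exfalso; apply: nrat.
  have hne : alpha ^+ i != alpha ^+ i0.
    apply: contra ii => /eqP h; apply/eqP; apply: val_inj => /=.
    exact: (ieexprIn a0 a1 h).
  have hne' : (ratr alpha : R) ^+ i0 - ratr alpha ^+ i != 0.
    by rewrite subr_eq0 -!rmorphXn /= (inj_eq (fmorph_inj _)) eq_sym.
  exists (((k : nat)%:R - (k0 : nat)%:R) / (alpha ^+ i0 - alpha ^+ i)).
  rewrite fmorph_div /= !rmorphB /= !rmorphXn /= !ratr_nat.
  apply: (mulIf hne'); rewrite divfK //.
  move: E; rewrite /val /a /= => E.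
  have Ek : (k : nat)%:R = (k0 : nat)%:R + (ratr alpha : R) ^+ i0 * v - ratr alpha ^+ i * v by rewrite -E addrK.
  rewrite Ek; ring.
case: pm Ppm minpm dist => i0 k0; rewrite /Pr /= => Pik minpm dist.
have k0lt : (k0 < size (P i0))%N.
  by rewrite ltnNge; apply: contra Pik => h; rewrite nth_default.
have an0 : forall i : nat, (ratr alpha : R) ^+ i != 0 by move=> i; rewrite expf_neq0 // gt_eqF.
have term0 : forall (i : 'I_d.+1) (k : nat) (hk : (k < size (P i))%N),
    (i, Ordinal (kN i k hk)) != (i0, k0) ->
    (P i)`_k * f ((val (i0, k0) - k%:R) / ratr alpha ^+ i) = 0.
  move=> i k hk ne; case: (eqVneq (P i)`_k 0) => [->|nz]; first by rewrite mul0r.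
  have := dist (i, Ordinal (kN i k hk)) nz ne; rewrite /val /= => lt.
  rewrite (_ : f _ = 0) ?mulr0 //; apply: contraTeq lt => nzf; rewrite -leNgt.
  have := vmin _ nzf; rewrite ler_pdivlMr ?exprn_gt0 // => h.
  rewrite mulrC in h. move: h; rewrite /a. move: (ratr alpha ^+ i * v) => x. lra.
have := heq (val (i0, k0)); rewrite /mahler_coef.
rewrite (bigD1 i0) //= (bigD1 (Ordinal k0lt)) //=.
rewrite big1; last first.
  move=> k ne; have := term0 i0 k (ltn_ord k).
  apply; apply: contra ne => /eqP [] h; apply/eqP/val_inj => /=; by rewrite -h.
rewrite big1; last first.
  move=> i ne; apply: big1 => k _; apply: term0; apply: contra ne => /eqP [] hi _; by rewrite hi.
have -> : (val (i0, k0) - (k0 : nat)%:R) / ratr alpha ^+ i0 = v.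
  by rewrite /val /= addrC addKr [_ ^+ _ * v]mulrC mulfK.
rewrite !addr0 => /eqP; rewrite mulf_eq0 (negbTE Pik) (negbTE fv) //.
Qed.

Theorem mainTheorem11 (R : realType) (K : fieldExtType rat) (alpha beta : rat)
  (f : R -> K) (d1 d2 : nat) (P Q : nat -> {poly K}) :
  0 < alpha -> 0 < beta -> mult_indep (ratr alpha : R) (ratr beta) ->
  well_ordered_support f ->
  P d1 != 0 -> mahler_eq (ratr alpha) d1 P f ->
  Q d2 != 0 -> mahler_eq (ratr beta) d2 Q f ->
  (exists s : R, restr_nonzero (shifted_Zring (ratr alpha) s) f) ->
  (exists s' : R, restr_nonzero (shifted_Zring (ratr beta) s') f) ->
  exists n : nat, (0 < n)%N /\
    restr_nonzero (Zring (ratr alpha)) (fun t => f (t / n%:R)) /\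
    restr_nonzero (Zring (ratr beta)) (fun t => f (t / n%:R)).
Proof.
move=> a0 b0 mi wos Pd eqP' Qd eqQ [s [t0 [_ ft0]]] _.
have a1 : alpha != 1.
  apply/negP => /eqP a1; apply: mi; exists 0; rewrite a1 rmorph1 ln1 mul0r.
  by rewrite rmorph0.
have [v [fv vmin]] := wos (fun t => f t != 0) (fun t h => h) (ex_intro _ t0 ft0).
have [q vq] := @key R _ _ _ _ _ a0 a1 Pd eqP' v fv vmin.
have dpos : (0 < denq q)%R := denq_gt0 q.
have Hn : ((`|denq q|%N)%:R : R) = (denq q)%:~R.
  by rewrite -[in RHS](gtr0_norm dpos) -natr_absz.
have Hv : ((numq q)%:~R : R) / (`|denq q|%N)%:R = v.
  by rewrite Hn vq -[in RHS](divq_num_den q) fmorph_div /= !ratr_int.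
have Z : forall g : R, Zring g (numq q)%:~R.
  by move=> g; exists [:: (numq q, 0)]; rewrite big_cons big_nil addr0 /= expr0z mulr1.
exists `|denq q|%N; split; first by rewrite absz_gt0 gt_eqF.
by split; exists (numq q)%:~R; rewrite Hv; split.
Qed.
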